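(* Let $\alpha,\beta,c_3,c_6,v$ be independent indeterminates and take $\mu_1=\mu_2=\mu_4=0$, $\mu_3=\alpha v+c_3$, $\mu_6=\beta v+c_6$. Then $s(t;\mu(v))$ is a power series in $\tau=t^3$, $s(t;\mu(v))=S(t^3,v)$, and $S(\tau,v)$ satisfies \[ \frac{\partial S}{\partial v}=(\alpha S^2+\beta S^3)\frac{\partial S}{\partial\tau}, \] with $S(\tau,0)=s_0(\tau)$, where $s_0(\tau)$ is the power series with $s_0(0)=0$ defined by $s_0=\tau+c_3s_0^2+c_6s_0^3$.
   Context: For parameters $\mu=(\mu_1,\mu_2,\mu_3,\mu_4,\mu_6)$, $s(t;\mu)$ denotes the unique formal power series in $t$ with $s(0;\mu)=0$ satisfying $s=t^3+\mu_1ts+\mu_2t^2s+\mu_3s^2+\mu_4ts^2+\mu_6s^3$ (the cubic $y^2+\mu_1xy+\mu_3y=x^3+\mu_2x^2+\mu_4x+\mu_6$ in Tate coordinates $t=-x/y$, $s=-1/y$). *)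

(* Defs.v *)
From mathcomp Require Import all_boot all_order all_algebra.
From mathcomp Require Export mpoly.
Set Implicit Arguments. Unset Strict Implicit. Unset Printing Implicit Defensive.
Import GRing.Theory.
Local Open Scope ring_scope.

(* Formal power series in one variable over a ring R, as coefficient
   sequences: f represents \sum_n f n * t^n. *)
Definition ps (R : Type) := nat -> R.

Definition ps_add {R : nzRingType} (f g : ps R) : ps R := fun n => f n + g n.
Definition ps_scale {R : nzRingType} (a : R) (f : ps R) : ps R := fun n => a * f n.
Definition ps_mul {R : nzRingType} (f g : ps R) : ps R :=
  fun n => \sum_(i < n.+1) f i * g (n - i)%N.
Definition ps_shift {R : nzRingType} (k : nat) (f : ps R) : ps R :=
  fun n => if (k <= n)%N then f (n - k)%N else 0.
Definition ps_mono {R : nzRingType} (k : nat) : ps R := fun n => (n == k)%:R.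
Definition ps_deriv {R : nzRingType} (f : ps R) : ps R := fun n => f n.+1 *+ n.+1.

Definition is_tate_s {R : nzRingType} (mu1 mu2 mu3 mu4 mu6 : R) (s : ps R) : Prop :=
  s 0%N = 0 /\
  s = ps_add (ps_mono 3)
     (ps_add (ps_scale mu1 (ps_shift 1 s))
     (ps_add (ps_scale mu2 (ps_shift 2 s))
     (ps_add (ps_scale mu3 (ps_mul s s))
     (ps_add (ps_scale mu4 (ps_shift 1 (ps_mul s s)))
             (ps_scale mu6 (ps_mul s (ps_mul s s))))))).

Definition is_s0 {R : nzRingType} (c3 c6 : R) (s0 : ps R) : Prop :=
  s0 0%N = 0 /\
  s0 = ps_add (ps_mono 1)
     (ps_add (ps_scale c3 (ps_mul s0 s0))
             (ps_scale c6 (ps_mul s0 (ps_mul s0 s0)))).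

(* The base ring Q[alpha, beta, c3, c6] of independent indeterminates. *)
Definition K := {mpoly rat[4]}.
Definition alpha : K := 'X_(@Ordinal 4 0 isT).
Definition beta  : K := 'X_(@Ordinal 4 1 isT).
Definition c3    : K := 'X_(@Ordinal 4 2 isT).
Definition c6    : K := 'X_(@Ordinal 4 3 isT).

(* v is the variable of {poly K}; mu3 = alpha v + c3, mu6 = beta v + c6. *)
Definition mu3v : {poly K} := alpha *: 'X + c3%:P.
Definition mu6v : {poly K} := beta *: 'X + c6%:P.

(* Main.v *)
Require Import Defs.
From mathcomp Require Import all_boot all_order all_algebra ring zify.
Set Implicit Arguments. Unset Strict Implicit.
Import GRing.Theory.
Local Open Scope ring_scope.

From Stdlib Require Import FunctionalExtensionality.
Lemma sum3 (R : nzRingType) (F : nat -> R) n :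
  (forall k, ~~ (3 %| k)%N -> F k = 0) ->
  \sum_(i < (3 * n).+1) F i = \sum_(j < n.+1) F (3 * j)%N.
Proof.
move=> HF; elim: n => [|n IH]; first by rewrite !big_ord1.
rewrite (_ : (3 * n.+1).+1 = ((3 * n).+1).+3)%N; last by rewrite mulnS; lia.
move: IH; rewrite !big_ord_recr /= => ->.
rewrite (HF (3 * n).+1) ?(HF (3 * n).+2); first last.
- apply/negP; lia.
- apply/negP; lia.
have -> : (3 * n.+1 = (3*n).+3)%N by lia.
by rewrite !addr0.
Qed.

Lemma mul3 (R : nzRingType) (f g : ps R) n :
  (forall k, ~~ (3 %| k)%N -> f k = 0) ->
  ps_mul f g (3 * n)%N = ps_mul (fun j => f (3 * j)%N) (fun j => g (3 * j)%N) n.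
Proof.
move=> Hf; rewrite /ps_mul (@sum3 _ (fun i => f i * g (3 * n - i)%N)).
  by apply: eq_bigr => i _; rewrite -mulnBr.
by move=> k hk; rewrite Hf ?mul0r.
Qed.

Lemma mul_agree (R : nzRingType) (f g f' g' : ps R) n :
  f 0%N = 0 -> g 0%N = 0 -> f' 0%N = 0 -> g' 0%N = 0 ->
  (forall k, (0 < k < n)%N -> f k = f' k /\ g k = g' k) ->
  ps_mul f g n = ps_mul f' g' n.
Proof.
move=> f0 g0 f'0 g'0 H; apply: eq_bigr => [[i /= hi]] _.
case: (posnP i) => [->|ip]; first by rewrite f0 f'0 !mul0r.
case: (ltngtP i n) => [lt|gt|eq]; last first.
- by rewrite eq subnn g0 g'0 !mulr0.
- lia.
have [h1 _] := H i ltac:(lia).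
have [_ h2] := H (n - i)%N ltac:(lia).
by rewrite h1 h2.
Qed.

Lemma mul_van (R : nzRingType) (f g : ps R) n :
  f 0%N = 0 -> g 0%N = 0 ->
  (forall k, (0 < k < n)%N -> ~~ (3 %| k)%N -> f k = 0 /\ g k = 0) ->
  ~~ (3 %| n)%N -> ps_mul f g n = 0.
Proof.
move=> f0 g0 H hn; apply: big1 => [[i /= hi]] _.
case: (posnP i) => [->|ip]; first by rewrite f0 mul0r.
case: (ltngtP i n) => [lt|gt|eq]; last first.
- by rewrite eq subnn g0 mulr0.
- lia.
case h3: (3 %| i)%N; last by have [-> _] := H i ltac:(lia) (negbT h3); rewrite mul0r.
case h4: (3 %| n - i)%N.
  by move: hn; rewrite -(subnKC (ltnW lt)) dvdn_addr // h4.
by have [_ ->] := H (n - i)%N ltac:(lia) (negbT h4); rewrite mulr0.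
Qed.

Lemma s0_uniq (R : nzRingType) (a b : R) (e e' : ps R) :
  is_s0 a b e -> is_s0 a b e' -> forall n, e n = e' n.
Proof.
move=> [e0 He] [e'0 He']; elim/ltn_ind => n IH.
case: (posnP n) => [->|np]; first by rewrite e0 e'0.
have H1 := congr1 (fun f => f n) He; have H2 := congr1 (fun f => f n) He'.
rewrite /= /ps_add /ps_scale in H1 H2; rewrite H1 H2.
have ee0 : ps_mul e e 0%N = 0 by rewrite /ps_mul big_ord1 e0 mul0r.
have ee'0 : ps_mul e' e' 0%N = 0 by rewrite /ps_mul big_ord1 e'0 mul0r.
have M2 : forall k, (k <= n)%N -> ps_mul e e k = ps_mul e' e' k.
  move=> k hk; apply: mul_agree => // j hj; split; apply: IH; lia.
rewrite M2 // (@mul_agree _ e (ps_mul e e) e' (ps_mul e' e')) //.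
move=> k hk; split; [apply: IH; lia | apply: M2; lia].
Qed.
Definition T (R : nzRingType) (f : ps R) m : {poly R} := \poly_(i < m) f i.
Definition eqm (R : nzRingType) k (p q : {poly R}) := forall i, (i < k)%N -> p`_i = q`_i.

Lemma T_coef (R : nzRingType) (f : ps R) m i : (i < m)%N -> (T f m)`_i = f i.
Proof. by move=> h; rewrite /T coef_poly h. Qed.

Lemma eqm_refl (R : nzRingType) k (p : {poly R}) : eqm k p p.
Proof. by []. Qed.
Lemma eqm_sym (R : nzRingType) k (p q : {poly R}) : eqm k p q -> eqm k q p.
Proof. by move=> H i hi; rewrite H. Qed.
Lemma eqm_trans (R : nzRingType) k (p q r : {poly R}) : eqm k p q -> eqm k q r -> eqm k p r.
Proof. by move=> H1 H2 i hi; rewrite H1 ?H2. Qed.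
Lemma eqm_le (R : nzRingType) k k' (p q : {poly R}) : (k' <= k)%N -> eqm k p q -> eqm k' p q.
Proof. by move=> hk H i hi; apply: H; lia. Qed.
Lemma eqm_eq (R : nzRingType) k (p q : {poly R}) : p = q -> eqm k p q.
Proof. by move=> ->. Qed.
Lemma eqm_add (R : nzRingType) k (p q p' q' : {poly R}) :
  eqm k p p' -> eqm k q q' -> eqm k (p + q) (p' + q').
Proof. by move=> H1 H2 i hi; rewrite !coefD H1 ?H2. Qed.
Lemma eqm_mul (R : nzRingType) k (p q p' q' : {poly R}) :
  eqm k p p' -> eqm k q q' -> eqm k (p * q) (p' * q').
Proof.
move=> H1 H2 i hi; rewrite !coefM; apply: eq_bigr => [[j /= hj]] _.
by rewrite H1 ?H2 //; lia.
Qed.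

Lemma ps_mul_T (R : nzRingType) (f g : ps R) n m :
  (n < m)%N -> ps_mul f g n = (T f m * T g m)`_n.
Proof.
move=> h; rewrite coefM; apply: eq_bigr => [[j /= hj]] _.
by rewrite !T_coef //; lia.
Qed.

Lemma T_mul (R : nzRingType) (f g : ps R) m :
  eqm m (T (ps_mul f g) m) (T f m * T g m).
Proof. by move=> i hi; rewrite T_coef // (ps_mul_T _ _ hi). Qed.

Lemma eqm_deriv (R : nzRingType) k (p q : {poly R}) :
  eqm k.+1 p q -> eqm k p^`() q^`().
Proof. by move=> H i hi; rewrite !coef_deriv H. Qed.

Definition dV (R : nzRingType) (p : {poly {poly R}}) : {poly {poly R}} :=
  map_poly (@deriv R) p.

Lemma coef_dV (R : nzRingType) (p : {poly {poly R}}) i : (dV p)`_i = (p`_i)^`().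
Proof. by rewrite /dV coef_map_id0 // deriv0. Qed.

Lemma dV_add (R : nzRingType) (p q : {poly {poly R}}) : dV (p + q) = dV p + dV q.
Proof. by apply/polyP => i; rewrite coefD !coef_dV coefD derivD. Qed.

Lemma dV_mul (R : comNzRingType) (p q : {poly {poly R}}) :
  dV (p * q) = dV p * q + p * dV q.
Proof.
apply/polyP => i; rewrite coefD !coef_dV !coefM.
rewrite (big_morph _ (@derivD _) (@deriv0 _)) -big_split /=.
by apply: eq_bigr => j _; rewrite derivM !coef_dV.
Qed.

Lemma dV_C (R : nzRingType) (c : {poly R}) : dV c%:P = (c^`())%:P.
Proof. by apply/polyP => i; rewrite coef_dV !coefC; case: (i == 0%N) => //; rewrite deriv0. Qed.

Lemma dV_X (R : nzRingType) : dV ('X : {poly {poly R}}) = 0.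
Proof. by apply/polyP => i; rewrite coef_dV coefX coef0; case: (i == 1%N); rewrite ?derivC ?deriv0. Qed.

Lemma eqm_dV (R : nzRingType) k (p q : {poly {poly R}}) :
  eqm k p q -> eqm k (dV p) (dV q).
Proof. by move=> H i hi; rewrite !coef_dV H. Qed.

Lemma pde_alg (R : comNzRingType) n (A m3 m6 a b : {poly {poly R}}) :
  m3^`() = 0 -> m6^`() = 0 -> dV m3 = a -> dV m6 = b -> dV ('X : {poly {poly R}}) = 0 ->
  eqm n.+2 A ('X + m3 * (A * A) + m6 * (A * (A * A))) ->
  eqm n.+1 (dV A) ((a * (A * A) + b * (A * (A * A))) * A^`()).
Proof.
move=> d3 d6 v3 v6 vX H.
set D := 1 - 2%:R * m3 * A - 3%:R * m6 * (A * A).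
set E := a * (A * A) + b * (A * (A * A)).
set Q := m3 * (A^`()*A + A*A^`()) + m6 * (A^`()*(A*A) + A*(A^`()*A + A*A^`())).
have h1 : eqm n.+1 A^`() (1 + Q).
  apply: eqm_trans (eqm_deriv H) (eqm_eq _).
  by rewrite !derivD !derivM d3 d6 derivX /Q; ring.
have Ha : eqm n.+1 (A^`() * D) 1.
  have h2 := eqm_add h1 (@eqm_refl _ n.+1 (- Q)).
  by apply: eqm_trans (eqm_eq _) (eqm_trans h2 (eqm_eq _)); rewrite /D /Q; ring.
set Q' := m3 * (dV A * A + A * dV A) + m6 * (dV A * (A * A) + A * (dV A * A + A * dV A)).
have h3 : eqm n.+2 (dV A) (E + Q').
  apply: eqm_trans (eqm_dV H) (eqm_eq _).
  by rewrite !dV_add !dV_mul v3 v6 vX /E /Q'; ring.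
have Hb : eqm n.+2 (dV A * D) E.
  have h4 := eqm_add h3 (@eqm_refl _ n.+2 (- Q')).
  by apply: eqm_trans (eqm_eq _) (eqm_trans h4 (eqm_eq _)); rewrite /D /Q'; ring.
apply: eqm_trans (eqm_eq (esym (mulr1 (dV A)))) _.
apply: eqm_trans (eqm_mul (@eqm_refl _ n.+1 (dV A)) (eqm_sym Ha)) _.
apply: eqm_trans (eqm_eq _) (eqm_mul (eqm_le (leqnSn _) Hb) (@eqm_refl _ n.+1 A^`())).
ring.
Qed.

Lemma horner_psmul (R : comNzRingType) (f g : ps {poly R}) x n :
  (ps_mul f g n).[x] = ps_mul (fun i => (f i).[x]) (fun i => (g i).[x]) n.
Proof. by rewrite /ps_mul horner_sum; apply: eq_bigr => i _; rewrite hornerM. Qed.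

Lemma main_gen (F : comNzRingType) (al be k3 k6 : F) :
  forall s : ps {poly F},
    is_tate_s 0 0 (al *: 'X + k3%:P) 0 (be *: 'X + k6%:P) s ->
    exists S : ps {poly F},
      (forall n : nat, s n = if (3 %| n)%N then S (n %/ 3)%N else 0) /\
      (forall n : nat,
         (S n)^`() =
         ps_mul (ps_add (ps_scale al%:P (ps_mul S S))
                        (ps_scale be%:P (ps_mul S (ps_mul S S))))
                (ps_deriv S) n) /\
      (forall s0 : ps F, is_s0 k3 k6 s0 -> forall n : nat, (S n).[0] = s0 n).
Proof.
set mu3v := al *: 'X + k3%:P.
set mu6v := be *: 'X + k6%:P.
move=> s [s0 Hs].
have Hn : forall n, s n = (n == 3)%:R + mu3v * ps_mul s s n + mu6v * ps_mul s (ps_mul s s) n.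
  move=> n; have := congr1 (fun f => f n) Hs; rewrite /ps_add /ps_scale /ps_mono /= => ->.
  by rewrite !mul0r !add0r addrA.
have van : forall n, ~~ (3 %| n)%N -> s n = 0.
  elim/ltn_ind => n IH hn.
  have M2 : forall k, (k <= n)%N -> ~~ (3 %| k)%N -> ps_mul s s k = 0.
    move=> k hk hk3; apply: mul_van => // j hj hj3; split; apply: IH => //; lia.
  have ss0 : ps_mul s s 0%N = 0 by rewrite /ps_mul big_ord1 s0 mul0r.
  have M3 : ps_mul s (ps_mul s s) n = 0.
    apply: mul_van => //.
    by move=> k hk hk3; split; [apply: IH | apply: M2] => //; lia.
  have n3 : (n == 3) = false by apply/eqP => h; rewrite h in hn.
  rewrite Hn (M2 n (leqnn n) hn) M3 n3 !mulr0 !addr0.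
  exact: mulr0n.
pose S := fun j => s (3 * j)%N.
have E2 : forall n, ps_mul s s (3 * n)%N = ps_mul S S n.
  by move=> n; rewrite (@mul3 _ s s n van).
have E2f : (fun j => ps_mul s s (3 * j)%N) = ps_mul S S.
  by apply: functional_extensionality => j; exact: E2.
have HS : forall n, S n = (n == 1)%:R + mu3v * ps_mul S S n + mu6v * ps_mul S (ps_mul S S) n.
  move=> n; rewrite /S Hn E2 (@mul3 _ s (ps_mul s s) n van) E2f.
  by rewrite -{1}(muln1 3) eqn_pmul2l.
have S0 : S 0%N = 0 by rewrite /S muln0 s0.
exists S; split; [|split].
- move=> n; case: ifP => h; last by rewrite van // h.
  by rewrite /S mulnC divnK.
- move=> n.
  have coefAA : forall i, (i < n.+2)%N -> (T S n.+2 * T S n.+2)`_i = ps_mul S S i.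
    by move=> i hi; rewrite (ps_mul_T _ _ hi).
  have coefAAA : forall i, (i < n.+2)%N ->
      (T S n.+2 * (T S n.+2 * T S n.+2))`_i = ps_mul S (ps_mul S S) i.
    move=> i hi; rewrite (ps_mul_T _ _ hi).
    symmetry; exact: (eqm_mul (@eqm_refl _ n.+2 (T S n.+2)) (@T_mul _ S S n.+2) hi).
  have H : eqm n.+2 (T S n.+2) ('X + mu3v%:P * (T S n.+2 * T S n.+2)
                 + mu6v%:P * (T S n.+2 * (T S n.+2 * T S n.+2))).
    move=> i hi; rewrite T_coef // HS !coefD coefX !coefCM coefAA // coefAAA //.
  have dm3 : dV (mu3v%:P : {poly {poly F}}) = (al%:P)%:P.
    by rewrite dV_C /mu3v derivD derivZ derivX derivC addr0 alg_polyC.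
  have dm6 : dV (mu6v%:P : {poly {poly F}}) = (be%:P)%:P.
    by rewrite dV_C /mu6v derivD derivZ derivX derivC addr0 alg_polyC.
  have Hc := pde_alg (derivC _) (derivC _) dm3 dm6 (@dV_X _) H.
  have := Hc n (ltnSn n); rewrite coef_dV T_coef // => ->.
  rewrite (ps_mul_T _ _ (ltnSn n)).
  apply: (eqm_mul _ _ (ltnSn n)) => [i hi|i hi].
    rewrite T_coef // /ps_add /ps_scale !coefD !coefCM coefAA ?coefAAA //; lia.
  rewrite T_coef // coef_deriv T_coef //; lia.
- move=> e' He' n.
  pose e := fun i => (S i).[0].
  have ee : forall i, (ps_mul S S i).[0] = ps_mul e e i by move=> i; rewrite horner_psmul.
  have eef : (fun i => (ps_mul S S i).[0]) = ps_mul e e.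
    by apply: functional_extensionality => i; exact: ee.
  have He : is_s0 k3 k6 e.
    split; first by rewrite /e S0 horner0.
    apply: functional_extensionality => i.
    rewrite /ps_add /ps_scale /ps_mono {1}/e HS !hornerD !hornerM !horner_psmul eef addrA.
    by rewrite /mu3v /mu6v !hornerE -polyC_natr hornerC.
  exact: (s0_uniq He He').
Qed.

Theorem mainTheorem8 :
  forall s : ps {poly K},
    is_tate_s 0 0 mu3v 0 mu6v s ->
    exists S : ps {poly K},
      (forall n : nat, s n = if (3 %| n)%N then S (n %/ 3)%N else 0) /\
      (forall n : nat,
         (S n)^`() =
         ps_mul (ps_add (ps_scale alpha%:P (ps_mul S S))
                        (ps_scale beta%:P (ps_mul S (ps_mul S S))))
                (ps_deriv S) n) /\
      (forall s0 : ps K, is_s0 c3 c6 s0 -> forall n : nat, (S n).[0] = s0 n).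
Proof. exact: (@main_gen _ alpha beta c3 c6). Qed.
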